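(* There exists a planar graph that is not $\{1,3\}$-choosable. More specifically, there is a planar graph $G$ and an assignment $L$ with $L(v)\in\{\{1,2,3,4\},\{1,2,4,5\},\{1,3,4,5\},\{2,3,4,5\}\}$ for every vertex $v$ (so $L$ is a $\{1,3\}$-assignment with colour groups $\{4\}$ and $\{1,2,3,5\}$) such that $G$ has no proper colouring $f$ with $f(v)\in L(v)$ for all $v$.
   Context: For a partition $\lambda=\{k_1,\dots,k_q\}$ of $k$ (multiset of positive integers summing to $k$), a $\lambda$-assignment of a graph $G$ is an assignment $L$ of colour sets with $|L(v)|=k$ for all $v$ such that $\bigcup_{v}L(v)$ can be partitioned into sets $C_1,\dots,C_q$ (colour groups) with $|L(v)\cap C_i|=k_i$ for every vertex $v$ and every $i$; $G$ is $\lambda$-choosable if for every $\lambda$-assignment $L$ there is a proper colouring $f$ with $f(v)\in L(v)$ for all $v$. *)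

(* Defs.v *)
From Stdlib Require Import Reals List.
Import ListNotations.
Open Scope R_scope.

(* A finite simple graph on vertex set {0, ..., nv-1}, with edge list. *)
Record graph := Graph { nv : nat ; edges : list (nat * nat) }.

Definition well_formed (G : graph) : Prop :=
  forall u v, In (u, v) (edges G) -> (u < nv G)%nat /\ (v < nv G)%nat /\ u <> v.

Definition adj (G : graph) (u v : nat) : Prop :=
  In (u, v) (edges G) \/ In (v, u) (edges G).

Definition pt := (R * R)%type.

Definition planar_embedding (G : graph) (pos : nat -> pt)
    (gamma : nat -> R -> pt) : Prop :=
  (forall u v, (u < nv G)%nat -> (v < nv G)%nat -> pos u = pos v -> u = v) /\
  (forall i, (i < length (edges G))%nat ->
     let e := nth i (edges G) (0%nat, 0%nat) in
     continuity (fun t => fst (gamma i t)) /\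
     continuity (fun t => snd (gamma i t)) /\
     gamma i 0 = pos (fst e) /\ gamma i 1 = pos (snd e) /\
     (forall s t, 0 <= s <= 1 -> 0 <= t <= 1 -> gamma i s = gamma i t -> s = t) /\
     (forall t w, 0 < t < 1 -> (w < nv G)%nat -> gamma i t <> pos w)) /\
  (forall i j, (i < length (edges G))%nat -> (j < length (edges G))%nat -> i <> j ->
     forall s t, 0 < s < 1 -> 0 <= t <= 1 -> gamma i s <> gamma j t).

Definition planar (G : graph) : Prop :=
  exists pos gamma, planar_embedding G pos gamma.

Definition L_colouring (G : graph) (L : nat -> list nat) (f : nat -> nat) : Prop :=
  (forall v, (v < nv G)%nat -> In (f v) (L v)) /\
  (forall u v, adj G u v -> f u <> f v).

Definition admissible_list (l : list nat) : Prop :=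
  l = [1;2;3;4]%nat \/ l = [1;2;4;5]%nat \/ l = [1;3;4;5]%nat \/ l = [2;3;4;5]%nat.

(* Main.v *)
Require Import Defs.
From Stdlib Require Import Reals List.
From Stdlib Require Import Lra Lia ZArith Bool Psatz.
Import ListNotations.
Local Open Scope nat_scope.

Inductive tree := Leaf : nat -> tree | Node : nat -> forest -> tree
with forest := FNil : forest | FCons : nat -> tree -> forest -> forest.
Scheme tree_ind2 := Induction for tree Sort Prop
  with forest_ind2 := Induction for forest Sort Prop.

Definition E8 : list (nat*nat) := [(0,1); (0,2); (0,3); (0,4); (0,5); (0,6); (0,7); (0,9); (0,10); (0,32); (0,34); (0,50); (0,51); (0,52); (0,54); (0,55); (0,57); (0,58); (0,59); (0,60); (0,62); (0,63); (0,67); (0,68); (0,70); (0,72); (0,73); (0,78); (0,79); (0,81); (0,82); (0,84); (0,85); (1,2); (1,3); (1,4); (1,5); (1,6); (1,7); (1,8); (1,10); (1,11); (1,13); (1,14); (1,19); (1,21); (1,22); (1,24); (1,25); (1,26); (1,28); (1,30); (1,31); (1,35); (1,36); (1,38); (1,39); (1,43); (1,44); (1,46); (1,90); (1,91); (1,92); (1,94); (1,95); (1,97); (1,98); (1,99); (1,101); (1,103); (1,104); (2,3); (2,4); (2,35); (2,36); (2,37); (2,39); (2,41); (2,42); (2,50); (2,51); (2,53); (2,54); (2,59); (2,60); (2,61); (2,63); (2,65); (2,66); (2,74); (2,90); (2,91); (2,93); (2,94); (2,105); (2,107); (3,5); (3,29); (3,31); (3,33); (3,34); (3,35); (3,40);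 (3,42); (3,43); (3,45); (3,46); (3,47); (3,49); (3,50); (3,55); (3,56); (3,58); (4,59); (4,74); (4,76); (4,77); (4,78); (4,80); (4,81); (4,86); (4,87); (4,89); (4,90); (4,102); (4,104); (4,106); (4,107); (5,6); (5,22); (5,23); (5,25); (5,29); (5,30); (5,32); (5,33); (6,7); (6,11); (6,12); (6,14); (6,15); (6,22); (6,27); (6,28); (7,8); (7,9); (7,11); (7,15); (7,17); (7,18); (7,20); (7,21); (8,9); (8,10); (9,10); (11,12); (11,13); (11,15); (11,16); (11,18); (11,19); (11,20); (12,13); (12,14); (13,14); (15,16); (15,17); (16,17); (16,18); (17,18); (19,20); (19,21); (20,21); (22,23); (22,24); (22,26); (22,27); (23,24); (23,25); (24,25); (26,27); (26,28); (27,28); (29,30); (29,31); (30,31); (32,33); (32,34); (33,34); (35,36); (35,40); (35,41); (35,43); (35,48); (35,49); (36,37); (36,38); (37,38); (37,39); (38,39); (40,41); (40,42); (41,42); (43,44); (43,45); (43,47); (43,48); (44,45); (44,46); (45,46); (47,48); (47,49); (48,49); (50,51); (50,55); (51,52); (51,53); (52,53); (52,54); (53,54); (55,56); (55,57); (56,57); (56,58); (57,58); (59,60); (59,64); (59,66); (59,67); (59,69); (59,70); (59,74); (59,75); (59,77); (59,78); (59,82); (59,83); (59,85); (59,86); (59,88); (59,89); (60,61); (60,62); (60,64); (60,65); (60,67); (60,71); (60,73); (61,62); (61,63); (62,63); (64,65); (64,66); (65,66); (67,68); (67,69); (67,71); (67,72); (68,69); (68,70); (69,70); (71,72); (71,73);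 (72,73); (74,75); (74,76); (75,76); (75,77); (76,77); (78,79); (78,80); (78,82); (78,86); (79,80); (79,81); (80,81); (82,83); (82,84); (83,84); (83,85); (84,85); (86,87); (86,88); (87,88); (87,89); (88,89); (90,91); (90,95); (90,96); (90,98); (90,102); (90,103); (90,105); (90,106); (91,92); (91,93); (91,95); (91,100); (91,101); (92,93); (92,94); (93,94); (95,96); (95,97); (95,99); (95,100); (96,97); (96,98); (97,98); (99,100); (99,101); (100,101); (102,103); (102,104); (103,104); (105,106); (105,107); (106,107)].
Definition LL : list (list nat) := [[1;2;3;4]; [1;2;3;4]; [1;2;4;5]; [1;3;4;5]; [1;2;4;5]; [1;2;3;4]; [1;2;3;4]; [1;2;3;4]; [2;3;4;5]; [1;2;4;5]; [1;3;4;5]; [1;2;3;4]; [1;2;4;5]; [1;3;4;5]; [2;3;4;5]; [1;2;3;4]; [2;3;4;5]; [1;3;4;5]; [1;2;4;5]; [1;3;4;5]; [2;3;4;5]; [1;2;4;5]; [1;2;3;4]; [1;3;4;5]; [2;3;4;5]; [1;2;4;5]; [1;3;4;5]; [2;3;4;5]; [1;2;4;5]; [1;2;4;5]; [2;3;4;5]; [1;3;4;5]; [2;3;4;5]; [1;2;4;5]; [1;3;4;5]; [1;3;4;5]; [1;2;4;5]; [2;3;4;5]; [1;2;3;4]; [1;3;4;5]; [1;3;4;5]; [1;2;3;4]; [2;3;4;5]; [1;3;4;5]; [1;2;3;4]; [1;2;4;5]; [2;3;4;5]; [1;2;4;5]; [1;2;3;4]; [2;3;4;5]; [1;3;4;5];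 [1;2;3;4]; [2;3;4;5]; [1;2;4;5]; [1;3;4;5]; [1;2;3;4]; [2;3;4;5]; [1;2;4;5]; [1;3;4;5]; [1;2;4;5]; [1;2;4;5]; [1;3;4;5]; [2;3;4;5]; [1;2;3;4]; [1;3;4;5]; [2;3;4;5]; [1;2;3;4]; [1;2;3;4]; [2;3;4;5]; [1;3;4;5]; [1;2;4;5]; [1;3;4;5]; [2;3;4;5]; [1;2;4;5]; [1;2;3;4]; [2;3;4;5]; [1;3;4;5]; [1;2;4;5]; [1;2;4;5]; [2;3;4;5]; [1;2;4;5]; [1;3;4;5]; [1;2;3;4]; [1;3;4;5]; [2;3;4;5]; [1;2;4;5]; [1;2;4;5]; [1;2;3;4]; [2;3;4;5]; [1;3;4;5]; [1;2;4;5]; [1;2;4;5]; [2;3;4;5]; [1;3;4;5]; [1;2;3;4]; [1;2;3;4]; [1;3;4;5]; [2;3;4;5]; [1;2;4;5]; [2;3;4;5]; [1;3;4;5]; [1;2;4;5]; [1;3;4;5]; [1;2;3;4]; [2;3;4;5]; [1;2;3;4]; [1;3;4;5]; [2;3;4;5]].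
Definition XS : list Z := [0; 264913032384000; 132456516192000; 150117385017600; 132456516192000; 129302789616000; 152106658704000; 107935825536000; 172932450768000; 69665633452800; 100297213632000; 152539257024000; 164881032624000; 208690094844000; 193166485344000; 134553684988800; 138459235939200; 128366884356480; 137359670374080; 204265801555200; 140245547904000; 182659409856000; 174607284852000; 156455162463600; 199675367892000; 215199384800400; 213609840444000; 177141048084000; 210759908158800; 155352571133760; 198842460616800; 193954184424000; 74147615942400; 123547238614800; 73324142892000; 177870178886400; 202198926758400; 172553896944000; 222322705862400; 204496641835200; 161567838432000; 149556722515200; 143389434988800; 203436388995840; 224835007837440; 192494125824000; 214180084198080; 174220265995776; 188340551118720; 169628440101120; 87200539826400; 73219018672800; 50301938887200; 86280702908400; 47058856724880; 96858827465400; 105846948207000; 59728077208800; 99756313757100; 75689437824000; 65671718112000; 80636459904000; 49392923580000; 80883811008000; 75411167832000; 100316332116000; 108747912873600; 60191939808000; 37664913686400; 61633235664000; 40327743456000; 54722864196000; 36663141715200; 28578566016000; 120292142256000; 108127768320000; 122657437188000; 103059279180000; 75689437824000; 58659314313600; 86201859744000; 52562109600000; 55046863872000; 59425591680000; 29587689331200; 42431957568000; 88304344128000; 104703722323200; 87603516000000; 107800108416000; 182127709764000; 206326496376000; 234091419962400; 184790734128000; 214251245208000; 210238330302000; 198839428187400; 223829678872800; 222312912822000; 242651968158600; 213075030168000; 236108743620750; 175504883954400; 219381104943000; 188336608960500; 153744170580000; 157292112978000; 138665415388500]%Z.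
Definition YS : list Z := [0; 0; 44152172064000; 14717390688000; 264913032384000; 5256210960000; 1212971760000; 373222080000; 139958280000; 149288832000; 41469120000; 610727040000; 743616720000; 355550580000; 717141600000; 716473296000; 622117584000; 602923305600; 550050177600; 281613024000; 410921280000; 233735040000; 1920538620000; 3729888162000; 1650989340000; 1768917150000; 983242260000; 1471289820000; 677242566000; 10407297700800; 3416537124000; 7884316440000; 3971359392000; 9329774454000; 6570263700000; 18922359456000; 18021294720000; 29584958832000; 12915261216000; 19898512920000; 18922359456000; 32471703264000; 31537265760000; 9951759417600; 6058269817600; 10434552128000; 6762991435200; 13231635056640; 14086645372800; 15838715692800; 20236412196000; 21462861420000; 15505822332000; 27288495234000; 15391937761200; 12417798393000; 11629366749000; 7154287140000; 10072214252100; 88304344128000; 44152172064000; 39246375168000; 27595107540000; 29434781376000; 62548910424000; 49671193572000; 57397823683200; 57737455776000; 37699162300800; 65662204608000; 45661648032000; 45425792412000; 33283945094400; 21132663552000; 132456516192000; 132456516192000; 195005426616000; 165570645240000; 122267553408000; 99851835283200; 156230762688000; 101889627840000; 79659163584000; 76347048960000; 40694099846400; 50790435696000; 135098099136000; 182344696934400; 128724756160000; 188890333632000; 96582876390000; 51369354036000; 19826023417200; 44074982952000; 20425096692000; 56509321869000; 74902522394700; 43563880760400; 49038518529000; 22089731964300; 48568491972000; 26327172997125; 137423635549200; 62318951194500; 144529375740750; 98159739678000; 153152846847000; 133491332724750]%Z.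
Definition TREE : tree := (Node 0 (FCons 1 (Node 1 (FCons 2 (Node 2 (FCons 4 (Node 4 (FCons 5 (Node 90 (FCons 1 (Node 102 (FCons 3 (Node 103 (FCons 4 (Leaf 104) FNil)) (FCons 4 (Node 103 (FCons 3 (Leaf 104) FNil)) FNil))) FNil)) FNil)) (FCons 5 (Node 4 (FCons 4 (Node 90 (FCons 1 (Node 91 (FCons 4 (Node 95 (FCons 3 (Node 96 (FCons 4 (Node 97 (FCons 5 (Leaf 98) FNil)) (FCons 5 (Node 97 (FCons 4 (Leaf 98) FNil)) FNil))) FNil)) FNil)) FNil)) FNil)) FNil))) (FCons 3 (Node 3 (FCons 4 (Node 5 (FCons 2 (Node 6 (FCons 4 (Node 7 (FCons 2 (Node 8 (FCons 4 (Node 9 (FCons 5 (Leaf 10) FNil)) (FCons 5 (Node 9 (FCons 4 (Leaf 10) FNil)) FNil))) FNil)) FNil)) FNil)) (FCons 5 (Node 5 (FCons 2 (Node 6 (FCons 4 (Node 7 (FCons 2 (Node 8 (FCons 4 (Node 9 (FCons 5 (Leaf 10) FNil)) (FCons 5 (Node 9 (FCons 4 (Leaf 10) FNil)) FNil))) FNil)) FNil)) (FCons 4 (Node 6 (FCons 2 (Node 7 (FCons 4 (Node 11 (FCons 1 (Node 12 (FCons 4 (Node 13 (FCons 5 (Leaf 14) FNil)) (FCons 5 (Node 13 (FCons 4 (Leaf 14) FNil)) FNil))) FNil)) FNil)) FNil)) FNil))) FNil))) (FCons 4 (Node 2 (FCons 2 (Node 4 (FCons 5 (Node 90 (FCons 1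 (Node 105 (FCons 3 (Node 106 (FCons 4 (Leaf 107) FNil)) (FCons 4 (Node 106 (FCons 3 (Leaf 107) FNil)) FNil))) FNil)) FNil)) (FCons 5 (Node 3 (FCons 3 (Node 50 (FCons 4 (Node 55 (FCons 2 (Node 56 (FCons 4 (Node 57 (FCons 5 (Leaf 58) FNil)) (FCons 5 (Node 57 (FCons 4 (Leaf 58) FNil)) FNil))) FNil)) FNil)) FNil)) FNil))) FNil)))) (FCons 2 (Node 1 (FCons 1 (Node 2 (FCons 4 (Node 4 (FCons 5 (Node 59 (FCons 1 (Node 78 (FCons 4 (Node 82 (FCons 3 (Node 83 (FCons 4 (Node 84 (FCons 5 (Leaf 85) FNil)) (FCons 5 (Node 84 (FCons 4 (Leaf 85) FNil)) FNil))) FNil)) FNil)) FNil)) FNil)) (FCons 5 (Node 4 (FCons 4 (Node 59 (FCons 1 (Node 60 (FCons 4 (Node 67 (FCons 3 (Node 68 (FCons 4 (Node 69 (FCons 5 (Leaf 70) FNil)) (FCons 5 (Node 69 (FCons 4 (Leaf 70) FNil)) FNil))) FNil)) FNil)) FNil)) FNil)) FNil))) (FCons 3 (Node 5 (FCons 1 (Node 6 (FCons 4 (Node 7 (FCons 1 (Node 11 (FCons 2 (Node 15 (FCons 3 (Node 16 (FCons 4 (Node 17 (FCons 5 (Leaf 18) FNil)) (FCons 5 (Node 17 (FCons 4 (Leaf 18) FNil)) FNil))) FNil)) FNil)) FNil)) FNil)) (FCons 4 (Node 3 (FCons 1 (Node 2 (FCons 4 (Node 4 (FCons 1 (Node 59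 (FCons 5 (Node 78 (FCons 4 (Node 86 (FCons 2 (Node 87 (FCons 3 (Node 88 (FCons 4 (Leaf 89) FNil)) (FCons 4 (Node 88 (FCons 3 (Leaf 89) FNil)) FNil))) FNil)) FNil)) FNil)) (FCons 5 (Node 59 (FCons 1 (Node 78 (FCons 4 (Node 82 (FCons 3 (Node 83 (FCons 4 (Node 84 (FCons 5 (Leaf 85) FNil)) (FCons 5 (Node 84 (FCons 4 (Leaf 85) FNil)) FNil))) FNil)) FNil)) FNil)) FNil))) (FCons 5 (Node 4 (FCons 1 (Node 59 (FCons 4 (Node 60 (FCons 1 (Node 67 (FCons 3 (Node 71 (FCons 4 (Node 72 (FCons 5 (Leaf 73) FNil)) (FCons 5 (Node 72 (FCons 4 (Leaf 73) FNil)) FNil))) FNil)) FNil)) FNil)) (FCons 4 (Node 59 (FCons 1 (Node 60 (FCons 4 (Node 67 (FCons 3 (Node 68 (FCons 4 (Node 69 (FCons 5 (Leaf 70) FNil)) (FCons 5 (Node 69 (FCons 4 (Leaf 70) FNil)) FNil))) FNil)) FNil)) FNil)) FNil))) FNil))) (FCons 5 (Node 2 (FCons 1 (Node 35 (FCons 4 (Node 43 (FCons 1 (Node 44 (FCons 2 (Node 45 (FCons 4 (Leaf 46) FNil)) (FCons 4 (Node 45 (FCons 2 (Leaf 46) FNil)) FNil))) FNil)) FNil)) (FCons 4 (Node 4 (FCons 1 (Node 59 (FCons 5 (Node 78 (FCons 4 (Node 86 (FCons 2 (Node 87 (FCons 3 (Node 88 (FCons 4 (Leaf 89) FNil)) (FCons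 4 (Node 88 (FCons 3 (Leaf 89) FNil)) FNil))) FNil)) FNil)) FNil)) (FCons 5 (Node 59 (FCons 1 (Node 78 (FCons 4 (Node 82 (FCons 3 (Node 83 (FCons 4 (Node 84 (FCons 5 (Leaf 85) FNil)) (FCons 5 (Node 84 (FCons 4 (Leaf 85) FNil)) FNil))) FNil)) FNil)) FNil)) FNil))) FNil))) FNil))) FNil))) (FCons 4 (Node 2 (FCons 1 (Node 4 (FCons 5 (Node 59 (FCons 4 (Node 60 (FCons 5 (Node 61 (FCons 3 (Node 62 (FCons 4 (Leaf 63) FNil)) (FCons 4 (Node 62 (FCons 3 (Leaf 63) FNil)) FNil))) FNil)) FNil)) FNil)) (FCons 5 (Node 4 (FCons 1 (Node 59 (FCons 4 (Node 60 (FCons 1 (Node 67 (FCons 3 (Node 71 (FCons 4 (Node 72 (FCons 5 (Leaf 73) FNil)) (FCons 5 (Node 72 (FCons 4 (Leaf 73) FNil)) FNil))) FNil)) FNil)) FNil)) FNil)) FNil))) FNil)))) (FCons 3 (Node 1 (FCons 1 (Node 3 (FCons 4 (Node 5 (FCons 2 (Node 6 (FCons 4 (Node 7 (FCons 2 (Node 11 (FCons 3 (Node 19 (FCons 4 (Node 20 (FCons 5 (Leaf 21) FNil)) (FCons 5 (Node 20 (FCons 4 (Leaf 21) FNil)) FNil))) FNil)) FNil)) FNil)) FNil)) (FCons 5 (Node 5 (FCons 2 (Node 6 (FCons 4 (Node 7 (FCons 2 (Node 11 (FCons 3 (Node 19 (FCons 4 (Node 20 (FCons 5 (Leaf 21)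 FNil)) (FCons 5 (Node 20 (FCons 4 (Leaf 21) FNil)) FNil))) FNil)) FNil)) FNil)) (FCons 4 (Node 6 (FCons 2 (Node 22 (FCons 3 (Node 26 (FCons 4 (Node 27 (FCons 5 (Leaf 28) FNil)) (FCons 5 (Node 27 (FCons 4 (Leaf 28) FNil)) FNil))) FNil)) FNil)) FNil))) FNil))) (FCons 2 (Node 5 (FCons 1 (Node 6 (FCons 4 (Node 22 (FCons 3 (Node 23 (FCons 4 (Node 24 (FCons 5 (Leaf 25) FNil)) (FCons 5 (Node 24 (FCons 4 (Leaf 25) FNil)) FNil))) FNil)) FNil)) (FCons 4 (Node 3 (FCons 1 (Node 2 (FCons 4 (Node 4 (FCons 1 (Node 59 (FCons 2 (Node 74 (FCons 3 (Node 75 (FCons 4 (Node 76 (FCons 5 (Leaf 77) FNil)) (FCons 5 (Node 76 (FCons 4 (Leaf 77) FNil)) FNil))) FNil)) (FCons 5 (Node 78 (FCons 2 (Node 79 (FCons 4 (Node 80 (FCons 5 (Leaf 81) FNil)) (FCons 5 (Node 80 (FCons 4 (Leaf 81) FNil)) FNil))) (FCons 4 (Node 86 (FCons 2 (Node 87 (FCons 3 (Node 88 (FCons 4 (Leaf 89) FNil)) (FCons 4 (Node 88 (FCons 3 (Leaf 89) FNil)) FNil))) FNil)) FNil))) FNil))) (FCons 5 (Node 90 (FCons 1 (Node 102 (FCons 3 (Node 103 (FCons 4 (Leaf 104) FNil)) (FCons 4 (Node 103 (FCons 3 (Leaf 104) FNil)) FNil))) FNil)) FNil))) (FCons 5 (Node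 4 (FCons 1 (Node 90 (FCons 4 (Node 91 (FCons 1 (Node 95 (FCons 3 (Node 99 (FCons 4 (Node 100 (FCons 5 (Leaf 101) FNil)) (FCons 5 (Node 100 (FCons 4 (Leaf 101) FNil)) FNil))) FNil)) FNil)) FNil)) (FCons 4 (Node 90 (FCons 1 (Node 91 (FCons 4 (Node 95 (FCons 3 (Node 96 (FCons 4 (Node 97 (FCons 5 (Leaf 98) FNil)) (FCons 5 (Node 97 (FCons 4 (Leaf 98) FNil)) FNil))) FNil)) FNil)) FNil)) FNil))) FNil))) (FCons 5 (Node 2 (FCons 1 (Node 50 (FCons 4 (Node 51 (FCons 2 (Node 52 (FCons 4 (Node 53 (FCons 5 (Leaf 54) FNil)) (FCons 5 (Node 53 (FCons 4 (Leaf 54) FNil)) FNil))) FNil)) FNil)) (FCons 4 (Node 4 (FCons 1 (Node 59 (FCons 2 (Node 74 (FCons 3 (Node 75 (FCons 4 (Node 76 (FCons 5 (Leaf 77) FNil)) (FCons 5 (Node 76 (FCons 4 (Leaf 77) FNil)) FNil))) FNil)) (FCons 5 (Node 78 (FCons 2 (Node 79 (FCons 4 (Node 80 (FCons 5 (Leaf 81) FNil)) (FCons 5 (Node 80 (FCons 4 (Leaf 81) FNil)) FNil))) (FCons 4 (Node 86 (FCons 2 (Node 87 (FCons 3 (Node 88 (FCons 4 (Leaf 89) FNil)) (FCons 4 (Node 88 (FCons 3 (Leaf 89) FNil)) FNil))) FNil)) FNil))) FNil))) (FCons 5 (Node 90 (FCons 1 (Node 102 (FCons 3 (Node 103 (FCons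 4 (Leaf 104) FNil)) (FCons 4 (Node 103 (FCons 3 (Leaf 104) FNil)) FNil))) FNil)) FNil))) FNil))) FNil))) FNil))) (FCons 4 (Node 3 (FCons 1 (Node 5 (FCons 2 (Node 32 (FCons 4 (Node 33 (FCons 5 (Leaf 34) FNil)) (FCons 5 (Node 33 (FCons 4 (Leaf 34) FNil)) FNil))) FNil)) (FCons 5 (Node 2 (FCons 1 (Node 50 (FCons 4 (Node 51 (FCons 2 (Node 52 (FCons 4 (Node 53 (FCons 5 (Leaf 54) FNil)) (FCons 5 (Node 53 (FCons 4 (Leaf 54) FNil)) FNil))) FNil)) FNil)) (FCons 2 (Node 35 (FCons 1 (Node 40 (FCons 3 (Node 41 (FCons 4 (Leaf 42) FNil)) (FCons 4 (Node 41 (FCons 3 (Leaf 42) FNil)) FNil))) (FCons 3 (Node 43 (FCons 1 (Node 47 (FCons 2 (Node 48 (FCons 4 (Leaf 49) FNil)) (FCons 4 (Node 48 (FCons 2 (Leaf 49) FNil)) FNil))) FNil)) FNil))) FNil))) FNil))) FNil)))) (FCons 4 (Node 1 (FCons 1 (Node 2 (FCons 2 (Node 4 (FCons 5 (Node 59 (FCons 1 (Node 60 (FCons 5 (Node 64 (FCons 3 (Node 65 (FCons 4 (Leaf 66) FNil)) (FCons 4 (Node 65 (FCons 3 (Leaf 66) FNil)) FNil))) FNil)) FNil)) FNil)) (FCons 5 (Node 3 (FCons 3 (Node 35 (FCons 4 (Node 36 (FCons 2 (Node 37 (FCons 3 (Node 38 (FCons 4 (Leaf 39) FNil)) (FCons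 4 (Node 38 (FCons 3 (Leaf 39) FNil)) FNil))) FNil)) FNil)) FNil)) FNil))) (FCons 2 (Node 2 (FCons 1 (Node 4 (FCons 5 (Node 90 (FCons 4 (Node 91 (FCons 5 (Node 92 (FCons 3 (Node 93 (FCons 4 (Leaf 94) FNil)) (FCons 4 (Node 93 (FCons 3 (Leaf 94) FNil)) FNil))) FNil)) FNil)) FNil)) (FCons 5 (Node 4 (FCons 1 (Node 90 (FCons 4 (Node 91 (FCons 1 (Node 95 (FCons 3 (Node 99 (FCons 4 (Node 100 (FCons 5 (Leaf 101) FNil)) (FCons 5 (Node 100 (FCons 4 (Leaf 101) FNil)) FNil))) FNil)) FNil)) FNil)) FNil)) FNil))) (FCons 3 (Node 3 (FCons 1 (Node 5 (FCons 2 (Node 29 (FCons 4 (Node 30 (FCons 5 (Leaf 31) FNil)) (FCons 5 (Node 30 (FCons 4 (Leaf 31) FNil)) FNil))) FNil)) (FCons 5 (Node 2 (FCons 1 (Node 35 (FCons 4 (Node 43 (FCons 1 (Node 44 (FCons 2 (Node 45 (FCons 4 (Leaf 46) FNil)) (FCons 4 (Node 45 (FCons 2 (Leaf 46) FNil)) FNil))) FNil)) FNil)) (FCons 2 (Node 35 (FCons 1 (Node 40 (FCons 3 (Node 41 (FCons 4 (Leaf 42) FNil)) (FCons 4 (Node 41 (FCons 3 (Leaf 42) FNil)) FNil))) (FCons 4 (Node 43 (FCons 1 (Node 44 (FCons 2 (Node 45 (FCons 4 (Leaf 46) FNil)) (FCons 4 (Node 45 (FCons 2 (Leaf 46) FNil))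 FNil))) FNil)) FNil))) FNil))) FNil))) FNil)))) FNil))))).

Definition G8 : graph := Graph 108 E8.
Definition L8 (v : nat) : list nat := nth v LL [].

Fixpoint lookup (p : list (nat*nat)) (v : nat) : option nat :=
  match p with [] => None | (w,c)::r => if Nat.eqb w v then Some c else lookup r v end.

Definition nbrs (v : nat) : list nat :=
  flat_map (fun e => if Nat.eqb (fst e) v then [snd e]
                     else if Nat.eqb (snd e) v then [fst e] else []) E8.

Definition avail (p : list (nat*nat)) (v c : nat) : bool :=
  negb (existsb (fun w => match lookup p w with Some c' => Nat.eqb c' c | None => false end) (nbrs v)).

Fixpoint check (t : tree) (p : list (nat*nat)) {struct t} : bool :=
  match t with
  | Leaf v => Nat.ltb v 108 && forallb (fun c => negb (avail p v c)) (L8 v)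
  | Node v fs => Nat.ltb v 108 && forallb (fun c => negb (avail p v c) || checkf fs v c p) (L8 v)
  end
with checkf (fs : forest) (v c : nat) (p : list (nat*nat)) {struct fs} : bool :=
  match fs with
  | FNil => false
  | FCons c' t r => if Nat.eqb c' c then check t ((v,c)::p) else checkf r v c p
  end.

Lemma nbrs_adj v w : In w (nbrs v) -> adj G8 v w.
Proof.
  unfold nbrs, adj; cbn [edges G8]. induction E8 as [|[a b] r IH]; simpl; [tauto|].
  intros H. apply in_app_or in H. destruct H as [H|H].
  - destruct (Nat.eqb_spec a v).
    + simpl in H. destruct H as [H|[]]. subst. left; left; reflexivity.
    + destruct (Nat.eqb_spec b v); simpl in H; [|tauto].
      destruct H as [H|[]]. subst. right; left; reflexivity.
  - destruct (IH H) as [H1|H1]; [left|right]; right; exact H1.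
Qed.

Definition consistent (f : nat -> nat) p := forall v c, lookup p v = Some c -> f v = c.

Lemma avail_true f p v : L_colouring G8 L8 f -> consistent f p -> avail p v (f v) = true.
Proof.
  intros [_ Hadj] Hc. unfold avail. apply negb_true_iff.
  destruct (existsb _ _) eqn:E; [|reflexivity]. exfalso.
  apply existsb_exists in E. destruct E as [w [Hw Hl]].
  destruct (lookup p w) as [c'|] eqn:El; [|discriminate].
  apply Nat.eqb_eq in Hl. apply Hc in El. apply (Hadj v w (nbrs_adj v w Hw)). congruence.
Qed.

Lemma check_sound f : L_colouring G8 L8 f ->
  forall t p, consistent f p -> check t p = true -> False.
Proof.
  intros Hf.
  apply (tree_ind2 (fun t => forall p, consistent f p -> check t p = true -> False)
                   (fun fs => forall v p, consistent f p -> checkf fs v (f v) p = true -> False)).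
  - intros v p Hc H. simpl in H. apply andb_true_iff in H. destruct H as [Hv H].
    apply Nat.ltb_lt in Hv. rewrite forallb_forall in H.
    pose proof (proj1 Hf v Hv) as Hin. specialize (H _ Hin).
    rewrite (avail_true f p v Hf Hc) in H. discriminate.
  - intros v fs IH p Hc H. simpl in H. apply andb_true_iff in H. destruct H as [Hv H].
    apply Nat.ltb_lt in Hv. rewrite forallb_forall in H.
    pose proof (proj1 Hf v Hv) as Hin. specialize (H _ Hin).
    rewrite (avail_true f p v Hf Hc) in H. simpl in H. exact (IH v p Hc H).
  - intros v p _ H. discriminate.
  - intros c t IHt r IHr v p Hc H. simpl in H.
    destruct (Nat.eqb_spec c (f v)).
    + apply (IHt ((v, f v) :: p)); [|exact H].
      intros w c0. simpl. destruct (Nat.eqb_spec v w); [intros E; inversion E; subst; reflexivity|].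
      apply Hc.
    + exact (IHr v p Hc H).
Qed.

Lemma tree_ok : check TREE [] = true.
Proof. vm_compute. reflexivity. Qed.

Lemma not_col : ~ (exists f, L_colouring G8 L8 f).
Proof.
  intros [f Hf]. apply (check_sound f Hf TREE []); [|exact tree_ok].
  intros v c H; discriminate.
Qed.

Local Open Scope R_scope.

Definition seg (A B : pt) (t : R) : pt :=
  (fst A + t * (fst B - fst A), snd A + t * (snd B - snd A)).
Definition orR (A B X : pt) : R :=
  (fst B - fst A) * (snd X - snd A) - (snd B - snd A) * (fst X - fst A).
Definition lamR (A B X : pt) : R :=
  (fst X - fst A) * (fst B - fst A) + (snd X - snd A) * (snd B - snd A).

Lemma or_seg_self A B s : orR A B (seg A B s) = 0.
Proof. destruct A, B; unfold orR, seg; simpl; ring. Qed.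
Lemma lam_seg_self A B s : lamR A B (seg A B s) = s * lamR A B B.
Proof. destruct A, B; unfold lamR, seg; simpl; ring. Qed.
Lemma or_seg A B C D t : orR A B (seg C D t) = (1 - t) * orR A B C + t * orR A B D.
Proof. destruct A, B, C, D; unfold orR, seg; simpl; ring. Qed.
Lemma lam_seg A B C D t : lamR A B (seg C D t) = (1 - t) * lamR A B C + t * lamR A B D.
Proof. destruct A, B, C, D; unfold lamR, seg; simpl; ring. Qed.
Lemma or_self1 A B : orR A B A = 0.
Proof. destruct A, B; unfold orR; simpl; ring. Qed.
Lemma or_self2 A B : orR A B B = 0.
Proof. destruct A, B; unfold orR; simpl; ring. Qed.
Lemma lam_self1 A B : lamR A B A = 0.
Proof. destruct A, B; unfold lamR; simpl; ring. Qed.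

Lemma pair_sound A B C D s t : 0 < lamR A B B -> 0 < s < 1 -> 0 <= t <= 1 ->
  ( (lamR A B C <= 0 /\ lamR A B D <= 0) \/
    (lamR A B B <= lamR A B C /\ lamR A B B <= lamR A B D) \/
    0 < orR A B C * orR A B D \/ 0 < orR C D A * orR C D B \/
    ((C = A \/ C = B) /\ orR A B D <> 0) \/ ((D = A \/ D = B) /\ orR A B C <> 0)) ->
  seg A B s <> seg C D t.
Proof.
  intros Hu Hs Ht Hc Heq.
  assert (E1 : (1 - t) * orR A B C + t * orR A B D = 0).
  { rewrite <- or_seg, <- Heq. apply or_seg_self. }
  assert (E2 : (1 - t) * lamR A B C + t * lamR A B D = s * lamR A B B).
  { rewrite <- lam_seg, <- Heq. apply lam_seg_self. }
  assert (E3 : (1 - s) * orR C D A + s * orR C D B = 0).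
  { rewrite <- or_seg, Heq. apply or_seg_self. }
  set (uu := lamR A B B) in *.
  set (lC := lamR A B C) in *. set (lD := lamR A B D) in *.
  set (oC := orR A B C) in *. set (oD := orR A B D) in *.
  set (pA := orR C D A) in *. set (pB := orR C D B) in *.
  destruct Hc as [[H1 H2]|[[H1 H2]|[H|[H|[[HC HD]|[HC HD]]]]]].
  - nra.
  - nra.
  - assert (Hn : oC <> 0) by (intro Z; rewrite Z in H; lra).
    assert (Hq : 0 < oC * oC) by (pose proof (Rsqr_pos_lt oC Hn); unfold Rsqr in *; lra).
    assert (E := f_equal (fun x => x * oC) E1). simpl in E.
    assert (E' : (1 - t) * (oC * oC) + t * (oC * oD) = 0) by lra.
    destruct (Rle_lt_or_eq_dec t 1 (proj2 Ht)) as [Hlt|Heq1].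
    + assert (0 < (1 - t) * (oC * oC)) by (apply Rmult_lt_0_compat; lra).
      assert (0 <= t * (oC * oD)) by (apply Rmult_le_pos; lra). lra.
    + subst t. lra.
  - assert (Hn : pA <> 0) by (intro Z; rewrite Z in H; lra).
    assert (Hq : 0 < pA * pA) by (pose proof (Rsqr_pos_lt pA Hn); unfold Rsqr in *; lra).
    assert (E := f_equal (fun x => x * pA) E3). simpl in E.
    assert (E' : (1 - s) * (pA * pA) + s * (pA * pB) = 0) by lra.
    assert (0 < (1 - s) * (pA * pA)) by (apply Rmult_lt_0_compat; lra).
    assert (0 <= s * (pA * pB)) by (apply Rmult_le_pos; lra). lra.
  - assert (HoC : oC = 0) by (unfold oC; destruct HC as [->| ->]; [apply or_self1|apply or_self2]).
    rewrite HoC in E1. assert (t = 0).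
    { assert (E1' : t * oD = 0) by lra. apply Rmult_integral in E1'; destruct E1'; [lra| contradiction]. }
    subst t. assert (lC = 0 \/ lC = uu) by (unfold lC, uu; destruct HC as [->| ->]; [left; apply lam_self1|right; reflexivity]).
    destruct H; nra.
  - assert (HoD : oD = 0) by (unfold oD; destruct HC as [->| ->]; [apply or_self1|apply or_self2]).
    rewrite HoD in E1. assert (t = 1).
    { assert (E1' : (1 - t) * oC = 0) by lra. apply Rmult_integral in E1'; destruct E1'; [lra|contradiction]. }
    subst t. assert (lD = 0 \/ lD = uu) by (unfold lD, uu; destruct HC as [->| ->]; [left; apply lam_self1|right; reflexivity]).
    destruct H; nra.
Qed.

Lemma vert_sound A B W s : 0 < lamR A B B -> 0 < s < 1 ->
  (W = A \/ W = B \/ orR A B W <> 0 \/ lamR A B W < 0 \/ lamR A B B < lamR A B W) ->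
  seg A B s <> W.
Proof.
  intros Hu Hs Hc Heq. subst W.
  rewrite lam_seg_self, or_seg_self in Hc.
  destruct Hc as [H|[H|[H|[H|H]]]].
  - assert (E := f_equal (lamR A B) H). rewrite lam_seg_self, lam_self1 in E. nra.
  - assert (E := f_equal (lamR A B) H). rewrite lam_seg_self in E. nra.
  - apply H; reflexivity.
  - nra.
  - nra.
Qed.

Lemma seg_inj A B s t : 0 < lamR A B B -> seg A B s = seg A B t -> s = t.
Proof.
  intros Hu H. assert (E := f_equal (lamR A B) H). rewrite !lam_seg_self in E. nra.
Qed.

Lemma seg0 A B : seg A B 0 = A.
Proof. destruct A, B; unfold seg; simpl; f_equal; ring. Qed.
Lemma seg1 A B : seg A B 1 = B.
Proof. destruct A, B; unfold seg; simpl; f_equal; ring. Qed.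

Lemma seg_cont1 A B : continuity (fun t => fst (seg A B t)).
Proof. unfold seg; simpl. reg. Qed.
Lemma seg_cont2 A B : continuity (fun t => snd (seg A B t)).
Proof. unfold seg; simpl. reg. Qed.

Definition ptZ (v : nat) : Z * Z := (nth v XS 0%Z, nth v YS 0%Z).
Definition ptR (p : Z * Z) : pt := (IZR (fst p), IZR (snd p)).
Definition pos8 (v : nat) : pt := ptR (ptZ v).
Definition gamma8 (i : nat) (t : R) : pt :=
  seg (pos8 (fst (nth i E8 (0%nat,0%nat)))) (pos8 (snd (nth i E8 (0%nat,0%nat)))) t.

Definition orZ (A B X : Z * Z) : Z :=
  ((fst B - fst A) * (snd X - snd A) - (snd B - snd A) * (fst X - fst A))%Z.
Definition lamZ (A B X : Z * Z) : Z :=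
  ((fst X - fst A) * (fst B - fst A) + (snd X - snd A) * (snd B - snd A))%Z.

Lemma orZ_R A B X : orR (ptR A) (ptR B) (ptR X) = IZR (orZ A B X).
Proof.
  destruct A, B, X; unfold orR, orZ, ptR; simpl.
  repeat (rewrite ?minus_IZR, ?mult_IZR, ?plus_IZR). reflexivity.
Qed.
Lemma lamZ_R A B X : lamR (ptR A) (ptR B) (ptR X) = IZR (lamZ A B X).
Proof.
  destruct A, B, X; unfold lamR, lamZ, ptR; simpl.
  repeat (rewrite ?minus_IZR, ?mult_IZR, ?plus_IZR). reflexivity.
Qed.

Definition zeqp (p q : Z * Z) : bool := Z.eqb (fst p) (fst q) && Z.eqb (snd p) (snd q).
Lemma zeqp_sound p q : zeqp p q = true -> ptR p = ptR q.
Proof.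
  destruct p, q; unfold zeqp; simpl. intros H. apply andb_true_iff in H.
  destruct H as [H1 H2]. apply Z.eqb_eq in H1, H2. subst. reflexivity.
Qed.

Definition fullZ (A B C D : Z * Z) : bool :=
  let uu := lamZ A B B in let lC := lamZ A B C in let lD := lamZ A B D in
  let oC := orZ A B C in let oD := orZ A B D in
  let pA := orZ C D A in let pB := orZ C D B in
  (Z.leb lC 0 && Z.leb lD 0) || (Z.leb uu lC && Z.leb uu lD) ||
  Z.ltb 0 (oC * oD) || Z.ltb 0 (pA * pB) ||
  ((zeqp C A || zeqp C B) && negb (Z.eqb oD 0)) ||
  ((zeqp D A || zeqp D B) && negb (Z.eqb oC 0)).

Definition ltall (a b c d : Z) : bool :=
  Z.ltb a c && Z.ltb a d && Z.ltb b c && Z.ltb b d.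
Definition bboxZ (A B C D : Z * Z) : bool :=
  ltall (fst A) (fst B) (fst C) (fst D) || ltall (fst C) (fst D) (fst A) (fst B) ||
  ltall (snd A) (snd B) (snd C) (snd D) || ltall (snd C) (snd D) (snd A) (snd B).
Lemma ptR_inj p q : ptR p = ptR q -> p = q.
Proof.
  destruct p as [a b], q as [c d]; unfold ptR; simpl. intros H. injection H as H1 H2.
  apply eq_IZR in H1, H2. subst. reflexivity.
Qed.
Lemma zeqp_refl p : zeqp p p = true.
Proof. destruct p; unfold zeqp; simpl; rewrite !Z.eqb_refl; reflexivity. Qed.

Definition pairZ (A B C D : Z * Z) : bool :=
  if bboxZ A B C D then true else fullZ A B C D.

Lemma ltall_R a b c d s t : ltall a b c d = true -> 0 <= s <= 1 -> 0 <= t <= 1 ->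
  IZR a + s * (IZR b - IZR a) < IZR c + t * (IZR d - IZR c).
Proof.
  unfold ltall. intros H Hs Ht. repeat rewrite andb_true_iff in H.
  destruct H as [[[H1 H2] H3] H4]. apply Z.ltb_lt, IZR_lt in H1, H2, H3, H4.
  assert (X1 : IZR a + s * (IZR b - IZR a) <= Rmax (IZR a) (IZR b)).
  { unfold Rmax; destruct (Rle_dec (IZR a) (IZR b)); nra. }
  assert (X2 : Rmin (IZR c) (IZR d) <= IZR c + t * (IZR d - IZR c)).
  { unfold Rmin; destruct (Rle_dec (IZR c) (IZR d)); nra. }
  assert (Rmax (IZR a) (IZR b) < Rmin (IZR c) (IZR d)).
  { unfold Rmax, Rmin; destruct (Rle_dec (IZR a) (IZR b)); destruct (Rle_dec (IZR c) (IZR d)); lra. }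
  lra.
Qed.

Lemma bbox_sound A B C D s t : bboxZ A B C D = true -> 0 <= s <= 1 -> 0 <= t <= 1 ->
  seg (ptR A) (ptR B) s <> seg (ptR C) (ptR D) t.
Proof.
  destruct A as [ax ay], B as [bx by0], C as [cx cy], D as [dx dy].
  unfold bboxZ, seg, ptR; simpl. intros H Hs Ht E. injection E as E1 E2.
  repeat rewrite orb_true_iff in H. destruct H as [[[H|H]|H]|H].
  - pose proof (ltall_R _ _ _ _ s t H Hs Ht). lra.
  - pose proof (ltall_R _ _ _ _ t s H Ht Hs). lra.
  - pose proof (ltall_R _ _ _ _ s t H Hs Ht). lra.
  - pose proof (ltall_R _ _ _ _ t s H Ht Hs). lra.
Qed.

Lemma IZR_nz z : Z.eqb z 0 = false -> IZR z <> 0.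
Proof. intros H E. apply eq_IZR in E. subst. discriminate. Qed.

Lemma fullZ_sound A B C D s t : fullZ A B C D = true -> 0 < lamR (ptR A) (ptR B) (ptR B) ->
  0 < s < 1 -> 0 <= t <= 1 -> seg (ptR A) (ptR B) s <> seg (ptR C) (ptR D) t.
Proof.
  intros H Hu Hs Ht. apply pair_sound; auto.
  unfold fullZ in H. rewrite !lamZ_R, !orZ_R.
  repeat rewrite orb_true_iff in H. repeat rewrite andb_true_iff in H.
  destruct H as [[[[[[H1 H2]|[H1 H2]]|H]|H]|[H HD]]|[H HD]].
  - left. apply Z.leb_le in H1, H2. split; apply IZR_le in H1, H2; assumption.
  - right; left. apply Z.leb_le in H1, H2. split; apply IZR_le; assumption.
  - right; right; left. apply Z.ltb_lt in H. apply IZR_lt in H. rewrite mult_IZR in H. exact H.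
  - right; right; right; left. apply Z.ltb_lt in H. apply IZR_lt in H. rewrite mult_IZR in H. exact H.
  - right; right; right; right; left. split.
    + rewrite orb_true_iff in H. destruct H as [H|H]; apply zeqp_sound in H; [left|right]; exact H.
    + apply negb_true_iff in HD. apply IZR_nz; exact HD.
  - right; right; right; right; right. split.
    + rewrite orb_true_iff in H. destruct H as [H|H]; apply zeqp_sound in H; [left|right]; exact H.
    + apply negb_true_iff in HD. apply IZR_nz; exact HD.
Qed.

Lemma pairZ_sound A B C D s t : pairZ A B C D = true -> 0 < lamR (ptR A) (ptR B) (ptR B) ->
  0 < s < 1 -> 0 <= t <= 1 -> seg (ptR A) (ptR B) s <> seg (ptR C) (ptR D) t.
Proof.
  unfold pairZ. destruct (bboxZ A B C D) eqn:Hb; intros H Hu Hs Ht.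
  - apply bbox_sound; auto; lra.
  - apply fullZ_sound; auto.
Qed.

Definition vertZ (A B W : Z * Z) : bool :=
  zeqp W A || zeqp W B || negb (Z.eqb (orZ A B W) 0) || Z.ltb (lamZ A B W) 0 ||
  Z.ltb (lamZ A B B) (lamZ A B W).

Lemma vertZ_sound A B W s : vertZ A B W = true -> 0 < lamR (ptR A) (ptR B) (ptR B) ->
  0 < s < 1 -> seg (ptR A) (ptR B) s <> ptR W.
Proof.
  intros H Hu Hs. apply vert_sound; auto.
  unfold vertZ in H. rewrite !lamZ_R, !orZ_R.
  repeat rewrite orb_true_iff in H.
  destruct H as [[[[H|H]|H]|H]|H].
  - left. apply zeqp_sound; exact H.
  - right; left. apply zeqp_sound; exact H.
  - right; right; left. apply negb_true_iff in H. apply IZR_nz; exact H.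
  - right; right; right; left. apply Z.ltb_lt in H. apply IZR_lt; exact H.
  - right; right; right; right. apply Z.ltb_lt in H. apply IZR_lt; exact H.
Qed.

Definition EC : list ((Z*Z)*(Z*Z)) := map (fun e => (ptZ (fst e), ptZ (snd e))) E8.
Definition enum {T} (l : list T) : list (nat * T) := combine (seq 0 (length l)) l.

Lemma in_enum_gen {T} (l : list T) k i d : (i < length l)%nat ->
  In ((k + i)%nat, nth i l d) (combine (seq k (length l)) l).
Proof.
  revert k i. induction l as [|x r IH]; intros k i Hi; simpl in *; [lia|].
  destruct i as [|i].
  - left. f_equal. lia.
  - right. replace (k + S i)%nat with (S k + i)%nat by lia. apply IH. lia.
Qed.
Lemma in_enum {T} (l : list T) i d : (i < length l)%nat -> In (i, nth i l d) (enum l).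
Proof. intros H. exact (in_enum_gen l 0 i d H). Qed.

Definition enumEC := Eval vm_compute in enum EC.
Lemma enumEC_eq : enumEC = enum EC. Proof. vm_compute. reflexivity. Qed.
Definition inner (i : nat) (A B : Z*Z) (y : nat * ((Z*Z)*(Z*Z))) : bool :=
  match y with (j, (C, D)) => if Nat.eqb i j then true else pairZ A B C D end.
Definition outer (x : nat * ((Z*Z)*(Z*Z))) : bool :=
  match x with (i, (A, B)) => forallb (inner i A B) enumEC end.
Definition check_pairs : bool := forallb outer enumEC.
Lemma outer_eq i A B : outer (i, (A, B)) = forallb (inner i A B) enumEC.
Proof. reflexivity. Qed.
Lemma inner_eq i A B j C D : inner i A B (j, (C, D)) = if Nat.eqb i j then true else pairZ A B C D.
Proof. reflexivity. Qed.

Definition edgeb (ab : (Z*Z)*(Z*Z)) : bool :=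
  match ab with (A, B) => Z.ltb 0 (lamZ A B B) && forallb (vertZ A B) (map ptZ (seq 0 108)) end.
Definition check_edges : bool := forallb edgeb EC.
Lemma edgeb_eq A B : edgeb (A, B) = Z.ltb 0 (lamZ A B B) && forallb (vertZ A B) (map ptZ (seq 0 108)).
Proof. reflexivity. Qed.
Definition injb (u v : nat) : bool := Nat.eqb u v || negb (zeqp (ptZ u) (ptZ v)).
Definition injrow (u : nat) : bool := forallb (injb u) (seq 0 108).
Definition check_inj : bool := forallb injrow (seq 0 108).
Definition wfb (e : nat * nat) : bool :=
  Nat.ltb (fst e) 108 && Nat.ltb (snd e) 108 && negb (Nat.eqb (fst e) (snd e)).
Definition check_wf : bool := forallb wfb E8.

Lemma check_pairs_ok : forallb outer enumEC = true. Proof. vm_compute. reflexivity. Qed.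
Lemma check_edges_ok : forallb edgeb EC = true. Proof. vm_compute. reflexivity. Qed.
Lemma check_inj_ok : forallb injrow (seq 0 108) = true. Proof. vm_compute. reflexivity. Qed.
Lemma check_wf_ok : forallb wfb E8 = true. Proof. vm_compute. reflexivity. Qed.

Lemma len_EC : length EC = length E8.
Proof. unfold EC. apply length_map. Qed.

Lemma map_nth' {A B} (f : A -> B) l d d' i : d' = f d -> nth i (map f l) d' = f (nth i l d).
Proof. intros ->. apply map_nth. Qed.
Lemma EC_nth i : nth i EC (ptZ 0%nat, ptZ 0%nat) =
  (ptZ (fst (nth i E8 (0%nat,0%nat))), ptZ (snd (nth i E8 (0%nat,0%nat)))).
Proof.
  unfold EC. apply (map_nth' (fun e => (ptZ (fst e), ptZ (snd e)))). reflexivity.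
Qed.

Lemma edge_facts_gen A B : In (A, B) EC ->
  0 < lamR (ptR A) (ptR B) (ptR B) /\ (forall w, (w < 108)%nat -> vertZ A B (ptZ w) = true).
Proof.
  intros Hin.
  pose proof check_edges_ok as H. rewrite forallb_forall in H.
  specialize (H _ Hin). rewrite edgeb_eq in H. apply andb_true_iff in H. destruct H as [H1 H2].
  split.
  - rewrite lamZ_R. apply Z.ltb_lt in H1. apply IZR_lt in H1. exact H1.
  - intros w Hw. rewrite forallb_forall in H2. apply H2. apply in_map. apply in_seq. lia.
Qed.

Lemma EC_in i : (i < length E8)%nat ->
  In (ptZ (fst (nth i E8 (0%nat,0%nat))), ptZ (snd (nth i E8 (0%nat,0%nat)))) EC.
Proof. intros Hi. rewrite <- (EC_nth i). apply nth_In. rewrite len_EC. exact Hi. Qed.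

Lemma edge_facts i : (i < length E8)%nat ->
  0 < lamR (ptR (ptZ (fst (nth i E8 (0%nat,0%nat))))) (ptR (ptZ (snd (nth i E8 (0%nat,0%nat)))))
           (ptR (ptZ (snd (nth i E8 (0%nat,0%nat))))) /\
  (forall w, (w < 108)%nat -> vertZ (ptZ (fst (nth i E8 (0%nat,0%nat)))) (ptZ (snd (nth i E8 (0%nat,0%nat)))) (ptZ w) = true).
Proof. intros Hi. exact (edge_facts_gen _ _ (EC_in i Hi)). Qed.

Lemma planar8 : planar_embedding G8 pos8 gamma8.
Proof.
  unfold planar_embedding. cbn [edges nv G8]. split; [|split].
  - intros u v Hu Hv H.
    pose proof check_inj_ok as C. rewrite forallb_forall in C.
    assert (Hu' : In u (seq 0 108)) by (apply in_seq; lia).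
    assert (Hv' : In v (seq 0 108)) by (apply in_seq; lia).
    specialize (C u Hu'). unfold injrow in C. rewrite forallb_forall in C. specialize (C v Hv').
    unfold injb in C. apply orb_true_iff in C. destruct C as [C|C]; [apply Nat.eqb_eq; exact C|].
    exfalso. unfold pos8 in H. apply ptR_inj in H. rewrite H, zeqp_refl in C.
    discriminate.
  - intros i Hi. cbv zeta.
    destruct (edge_facts i Hi) as [Hu Hv].
    split; [exact (seg_cont1 _ _)|].
    split; [exact (seg_cont2 _ _)|].
    split; [apply seg0|]. split; [apply seg1|]. split.
    + intros s t _ _ H. exact (seg_inj _ _ s t Hu H).
    + intros t w Ht Hw. exact (vertZ_sound _ _ (ptZ w) t (Hv w Hw) Hu Ht).
  - intros i j Hi Hj Hij s t Hs Ht.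
    pose proof check_pairs_ok as C. rewrite forallb_forall in C.
    assert (Hi' : (i < length EC)%nat) by (rewrite len_EC; exact Hi).
    assert (Hj' : (j < length EC)%nat) by (rewrite len_EC; exact Hj).
    rewrite enumEC_eq in C.
    specialize (C _ (in_enum EC i (ptZ 0%nat, ptZ 0%nat) Hi')).
    rewrite EC_nth, outer_eq in C. rewrite forallb_forall in C.
    specialize (C _ (in_enum EC j (ptZ 0%nat, ptZ 0%nat) Hj')).
    rewrite EC_nth, inner_eq in C.
    destruct (Nat.eqb_spec i j); [contradiction|].
    destruct (edge_facts i Hi) as [Hu _].
    exact (pairZ_sound _ _ _ _ s t C Hu Hs Ht).
Qed.

Lemma wf8 : well_formed G8.
Proof.
  intros u v H. cbn [edges nv G8] in *.
  pose proof check_wf_ok as C. rewrite forallb_forall in C.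
  specialize (C _ H). unfold wfb in C. apply andb_true_iff in C. destruct C as [C C3].
  apply andb_true_iff in C. destruct C as [C1 C2].
  apply Nat.ltb_lt in C1, C2. apply negb_true_iff, Nat.eqb_neq in C3. auto.
Qed.

Lemma adm_all : Forall admissible_list LL.
Proof.
  unfold LL.
  repeat (apply Forall_cons; [unfold admissible_list;
    first [left; reflexivity | right; left; reflexivity | right; right; left; reflexivity
          | right; right; right; reflexivity] |]).
  apply Forall_nil.
Qed.

Lemma adm8 : forall v, (v < nv G8)%nat -> admissible_list (L8 v).
Proof.
  intros v Hv. cbn [nv G8] in Hv.
  unfold L8. apply (proj1 (Forall_forall _ _) adm_all). apply nth_In.
  change (length LL) with 108%nat. exact Hv.
Qed.

Theorem mainTheorem8 :
  exists (G : graph) (L : nat -> list nat),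
    well_formed G /\ planar G /\
    (forall v, (v < nv G)%nat -> admissible_list (L v)) /\
    ~ (exists f : nat -> nat, L_colouring G L f).
Proof.
  exists G8, L8. split; [exact wf8|]. split; [exists pos8, gamma8; exact planar8|].
  split; [exact adm8|exact not_col].
Qed.
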